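(* Let $(G,\cdot)$ be an abelian group of order $n\ge 2$ which is generated by $r$ elements, let $S$ be a set with $|S|=n$, and let $\mathcal{X}_G$ be the set of all binary operations $*:S\times S\to S$ such that $(S,* )$ is isomorphic to $(G,\cdot)$. Then any query-algorithm with respect to $\mathcal{X}_G$ which solves product-recovering satisfies, for $*$ uniformly distributed on $\mathcal{X}_G$, \[E(N)\ \ge\ n-\frac{n}{\ln n}+\frac12-r.\]
   Context: Let $S$ be a finite set and $\mathcal{X}$ a set of binary operations $*:S\times S\to S$. A query-algorithm with respect to $\mathcal{X}$ is a rooted tree $T$ in which every non-leaf node $v$ is labeled by a pair $(x_v,y_v)\in S^2$ (the query ''$x_v*y_v$''), leaves are unlabeled, and every edge from $v$ to a child is labeled by an element of $S$ (a possible answer), distinct edges leaving the same node having distinct labels. It is required that for every $*\in\mathcal{X}$ there is a path $(v_0,\dots,v_k)$ from the root $v_0$ to a leaf $v_k$ such that for each $0\le i<k$ the edge $(v_i,v_{i+1})$ is labeled $x_{v_i}*y_{v_i}$. This leaf is uniquely determined and is denoted $L( * )$, giving a map $L:\mathcal{X}\to\{\text{leaves of }T\}$. The query-algorithm solves product-recovering if $L$ is a bijection. The number of queries used on $*$ is the depth $N( * )$ of $L( * )$; $E(N)$ denotes its expectation when $*$ is uniformly distributed on $\mathcal{X}$. *)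

(* Defs.v *)
From mathcomp Require Import all_boot all_fingroup.
From Stdlib Require Import Reals.
Set Implicit Arguments.
Unset Strict Implicit.
Unset Printing Implicit Defensive.

Definition binop (S : finType) := {ffun S * S -> S}.

Definition iso_to_group (S : finType) (gT : finGroupType) (G : {group gT})
    (op : binop S) : bool :=
  [exists f : {ffun S -> gT},
    [&& injectiveb f, f @: [set: S] == G
      & [forall x : S, forall y : S, f (op (x, y)) == (f x * f y)%g]]].

Definition X_G (S : finType) (gT : finGroupType) (G : {group gT}) : {set binop S} :=
  [set op : binop S | iso_to_group G op].

(* Query trees: a leaf, or a node labelled by a query (x, y) ("x * y"), whose
   children are indexed by (distinct) answers a : S; [ch a = None] means there
   is no edge labelled a. *)
Inductive qtree (S : Type) : Type :=
| Leaf : qtree S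
| Node : S -> S -> (S -> option (qtree S)) -> qtree S.
Arguments Leaf {S}.

(* Leaves are identified by the sequence of edge labels on the path from the
   root to them. *)
Fixpoint leaves (S : finType) (t : qtree S) : seq (seq S) :=
  match t with
  | Leaf => [:: [::]]
  | Node _ _ ch =>
      flatten [seq match ch a with
                   | Some t' => map (cons a) (leaves t')
                   | None => [::]
                   end | a <- enum S]
  end.

Fixpoint run (S : finType) (t : qtree S) (op : binop S) : option (seq S) :=
  match t with
  | Leaf => Some [::]
  | Node x y ch =>
      let a := op (x, y) in
      match ch a with
      | Some t' => omap (cons a) (run t' op)
      | None => None
      end
  end.

(* t is a query-algorithm w.r.t. X which solves product-recovering:
   every op in X reaches a leaf, and L : X -> leaves is a bijection. *)
Definition solves_product_recovering (S : finType) (X : {set binop S})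
    (t : qtree S) : Prop :=
  [/\ forall op, op \in X -> exists p, run t op = Some p,
      {in X &, forall op1 op2, run t op1 = run t op2 -> op1 = op2}
    & forall p, p \in leaves t -> exists2 op, op \in X & run t op = Some p].

Definition nqueries (S : finType) (t : qtree S) (op : binop S) : nat :=
  if run t op is Some p then size p else 0.

Definition expected_queries (S : finType) (X : {set binop S}) (t : qtree S) : R :=
  (INR (\sum_(op in X) nqueries t op) / INR #|X|)%R.
Arguments X_G S {gT} G.

(* Main.v *)
From Stdlib Require Import Reals Lra Lia Arith Factorial.
Local Open Scope R_scope.

Lemma ln_le x y : 0 < x -> x <= y -> ln x <= ln y.
Proof. intros Hx [H|H]. left; apply ln_increasing; lra. subst; lra. Qed.

Lemma sinh_ge t : 0 <= t -> t <= sinh t.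
Proof.
intros Ht.
assert (Hinc : increasing (sinh - id)%F).
{ apply (nonneg_derivative_1 _ (derivable_minus _ _ derivable_sinh derivable_id)).
  intro x.
  rewrite (derive_pt_eq_0 _ x (cosh x - 1)).
  - unfold cosh. pose proof (exp_ineq1_le x). pose proof (exp_ineq1_le (-x)). lra.
  - apply derivable_pt_lim_minus. apply derivable_pt_lim_sinh. apply derivable_pt_lim_id. }
specialize (Hinc 0 t Ht). unfold minus_fct, id in Hinc.
unfold sinh in *. rewrite Ropp_0, exp_0 in Hinc. lra.
Qed.

Lemma ln_bound x : 1 <= x -> 2 * ln x <= x - / x.
Proof.
intros Hx.
assert (H0 : 0 <= ln x) by (rewrite <- ln_1; apply ln_le; lra).
pose proof (sinh_ge _ H0) as H. unfold sinh in H.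
rewrite exp_ln in H by lra. rewrite exp_Ropp, exp_ln in H by lra. lra.
Qed.

Lemma stirling_aux n : (1 <= n)%nat ->
  3/4 + / (4 * INR n) <= ln (INR (fact n)) - (INR n + /2) * ln (INR n) + INR n.
Proof.
induction n as [|n IH]; intros Hn; [lia|].
destruct (Nat.eq_dec n 0) as [->|Hn0].
{ simpl. rewrite ln_1. lra. }
assert (IH' := IH ltac:(lia)).
assert (Hpos : 0 < INR n) by (apply lt_0_INR; lia).
rewrite S_INR in *.
replace (fact (S n)) with (S n * fact n)%nat by reflexivity.
rewrite mult_INR, S_INR, ln_mult; [| lra | apply lt_0_INR, lt_O_fact].
assert (Hx : 1 <= (INR n + 1) / INR n).
{ apply (Rmult_le_reg_r (INR n)); auto. field_simplify; lra. }
pose proof (ln_bound _ Hx) as HB.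
rewrite Rdiv_def, ln_mult in HB by (try apply Rinv_0_lt_compat; lra).
rewrite ln_Rinv in HB by lra.
assert (E : (INR n + 1) / INR n - / ((INR n + 1) / INR n) = (2 * INR n + 1) / (INR n * (INR n + 1))) by (field; lra).
rewrite Rdiv_def in E. rewrite E in HB.
set (L := ln (INR n + 1)) in *. set (l := ln (INR n)) in *.
set (F := ln (INR (fact n))) in *.
assert (K : (INR n + /2) * (L - l) <= 1 + / (4 * INR n * (INR n + 1))).
{ apply (Rmult_le_reg_l 2); [lra|].
  replace (2 * ((INR n + / 2) * (L - l))) with ((INR n + /2) * (2 * (L + - l))) by ring.
  apply Rle_trans with ((INR n + /2) * ((2 * INR n + 1) / (INR n * (INR n + 1)))).
  apply Rmult_le_compat_l; lra.
  right. field. lra. }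
assert (K2 : / (4 * INR n) - / (4 * (INR n + 1)) = / (4 * INR n * (INR n + 1))) by (field; lra).
nra.
Qed.

Lemma stirling n : (1 <= n)%nat ->
  (INR n + /2) * ln (INR n) - INR n <= ln (INR (fact n)).
Proof.
intros Hn. pose proof (stirling_aux n Hn).
assert (0 < INR n) by (apply lt_0_INR; lia).
assert (0 < / (4 * INR n)) by (apply Rinv_0_lt_compat; lra). lra.
Qed.

Close Scope R_scope.
Require Import Defs.
From HB Require Import structures.
From mathcomp Require Import all_boot all_fingroup.
From Stdlib Require Import Reals Lra Lia.

Lemma RplusA : associative Rplus. Proof. move=> x y z; lra. Qed.
Lemma RplusC : commutative Rplus. Proof. move=> x y; lra. Qed.
Lemma Rplus0 : left_id 0%R Rplus. Proof. move=> x; lra. Qed.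
HB.instance Definition _ := Monoid.isComLaw.Build R 0%R Rplus RplusA RplusC Rplus0.

Lemma INR_addn m n : INR (m + n) = (INR m + INR n)%R.
Proof. by rewrite -plus_INR. Qed.

Lemma INR_sum (I : finType) (P : pred I) (f : I -> nat) :
  INR (\sum_(i | P i) f i)%N = \big[Rplus/0%R]_(i | P i) INR (f i).
Proof. apply: (big_morph INR INR_addn). done. Qed.

Lemma sumR_mulr (I : finType) (P : pred I) (f : I -> R) c :
  \big[Rplus/0%R]_(i | P i) (f i * c)%R = ((\big[Rplus/0%R]_(i | P i) f i) * c)%R.
Proof. elim/big_rec2: _ => [|i x y _ ->]; lra. Qed.

Lemma sumR_const (I : finType) c :
  \big[Rplus/0%R]_(i : I) c = (INR #|I| * c)%R.
Proof.
rewrite big_const. elim: #|I| => [|k IH]; first by rewrite /= Rmult_0_l.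
rewrite iterS IH S_INR; lra.
Qed.

Lemma sumR_le (I : finType) (P : pred I) (f g : I -> R) :
  (forall i, P i -> f i <= g i)%R ->
  (\big[Rplus/0%R]_(i | P i) f i <= \big[Rplus/0%R]_(i | P i) g i)%R.
Proof. move=> H. elim/big_rec2: _ => [|i x y Pi Hxy]; first lra. have := H i Pi; lra. Qed.

Lemma ln_le' x y : (0 < x -> x <= y -> ln x <= ln y)%R.
Proof. intros Hx [H|H]. left; apply ln_increasing; lra. subst; lra. Qed.

Lemma ln_x_minus_1 x : (0 < x -> ln x <= x - 1)%R.
Proof. move=> Hx. have := exp_ineq1_le (ln x). rewrite exp_ln //. lra. Qed.

Lemma term_bound (m : nat) (c : R) : (0 < c)%R ->
  (INR m * ln c + INR m - c <= INR m * ln (INR m))%R.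
Proof.
move=> Hc. case: m => [|m]. rewrite /= !Rmult_0_l; lra.
have Hm : (0 < INR m.+1)%R by apply: lt_0_INR; lia.
have := ln_x_minus_1 (c / INR m.+1) ltac:(apply: Rdiv_lt_0_compat; lra).
rewrite Rdiv_def ln_mult ?ln_Rinv //; last by apply: Rinv_0_lt_compat.
move=> H.
have H2 := Rmult_le_compat_l _ _ _ (Rlt_le _ _ Hm) H.
have E : (INR m.+1 * (c * / INR m.+1 - 1) = c - INR m.+1)%R by field; lra.
rewrite E in H2. lra.
Qed.

Lemma ln_nat_nonneg (m : nat) : (0 <= INR m * ln (INR m))%R.
Proof.
case: m => [|m]; first by rewrite /= Rmult_0_l; lra.
apply: Rmult_le_pos; first by apply: pos_INR.
rewrite -ln_1; apply: ln_le'; first lra. have := lt_0_INR m.+1 ltac:(lia). rewrite S_INR. have := pos_INR m. lra.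
Qed.

Lemma log_sum (I : finType) (m : I -> nat) : (0 < #|I|)%N ->
  (INR (\sum_i m i)%N * ln (INR (\sum_i m i)%N) - INR (\sum_i m i)%N * ln (INR #|I|)
    <= \big[Rplus/0%R]_i (INR (m i) * ln (INR (m i))))%R.
Proof.
move=> HI. set M := (\sum_i m i)%N.
have Hk : (0 < INR #|I|)%R by apply: lt_0_INR; apply/ltP.
case: (posnP M) => HM.
  rewrite HM /= !Rmult_0_l Rminus_0_r.
  have : (\big[Rplus/0%R]_(i : I) 0 <= \big[Rplus/0%R]_i (INR (m i) * ln (INR (m i))))%R.
    by apply: sumR_le => i _; apply: ln_nat_nonneg.
  by rewrite sumR_const Rmult_0_r.
have HMr : (0 < INR M)%R by apply: lt_0_INR; apply/ltP.
set c := (INR M / INR #|I|)%R.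
have Hc : (0 < c)%R by apply: Rdiv_lt_0_compat.
have := @sumR_le I (fun i => true) _ _ (fun i _ => @term_bound (m i) c Hc).
rewrite big_split /= big_split /= sumR_mulr -INR_sum -/M sumR_const.
idtac.
rewrite /c Rdiv_def ln_mult ?ln_Rinv //; last by apply: Rinv_0_lt_compat.
have E : (INR #|I| * - (INR M * / INR #|I|) = - INR M)%R by field; lra.
rewrite E => H. apply: Rle_trans H. rewrite Rmult_plus_distr_l. set k := ln (INR #|I|). lra.
Qed.
Section QInd.
Variable S : finType.
Variable P : qtree S -> Prop.
Hypothesis HL : P Leaf.
Hypothesis HN : forall x y ch, (forall a t', ch a = Some t' -> P t') -> P (Node x y ch).
Fixpoint qtree_ind' (t : qtree S) : P t :=
  match t with
  | Leaf => HL
  | Node x y ch => HN x y ch (fun a =>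
      match ch a as o return (forall t', o = Some t' -> P t') with
      | Some t0 => fun t' e => match e in _ = z return (match z with Some u => P u | None => True end) with erefl => qtree_ind' t0 end
      | None => fun t' e => match e in _ = z return (match z with Some u => P u | None => True end) with erefl => I end
      end)
  end.
End QInd.

Lemma kraft (S : finType) (t : qtree S) : forall X : {set binop S},
  (forall op, op \in X -> run t op <> None) ->
  {in X &, forall op1 op2, run t op1 = run t op2 -> op1 = op2} ->
  (INR #|X| * ln (INR #|X|) <= INR (\sum_(op in X) nqueries t op)%N * ln (INR #|S|))%R.
Proof.
elim/qtree_ind': t => [|x y ch IH] X Hrun Hinj.
- have Hc : (#|X| <= 1)%N.
    apply: contraT; rewrite -ltnNge => /card_gt1P [o1 [o2 [h1 h2 hne]]].
    by rewrite (Hinj o1 o2) ?eqxx in hne.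
  have -> : (\sum_(op in X) nqueries Leaf op)%N = 0%N by apply: big1.
  rewrite /= Rmult_0_l.
  case: #|X| Hc => [|[|k]] // _; first by rewrite /= Rmult_0_l; lra.
  by rewrite /= ln_1; lra.
- set Xa := fun a => [set op in X | op (x, y) == a].
  have Hpart : forall F : binop S -> nat,
      (\sum_(op in X) F op = \sum_(a : S) \sum_(op in Xa a) F op)%N.
    move=> F; rewrite (partition_big (fun op : binop S => op (x, y)) xpredT) //.
    by apply: eq_bigr => a _; apply: eq_bigl => op; rewrite /Xa inE.
  have Hcard : #|X| = (\sum_(a : S) #|Xa a|)%N.
    rewrite -sum1_card Hpart; apply: eq_bigr => a _; by rewrite sum1_card.
  have HS : (0 < #|S|)%N by apply/card_gt0P; exists x.
  have Hper : forall a,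
      (INR #|Xa a| * ln (INR #|Xa a|) + INR #|Xa a| * ln (INR #|S|) <=
       INR (\sum_(op in Xa a) nqueries (Node x y ch) op)%N * ln (INR #|S|))%R.
    move=> a; case E: (ch a) => [t'|].
    + have Hxa : forall op, op \in Xa a -> op \in X /\ op (x, y) = a.
        by move=> op; rewrite /Xa inE => /andP [? /eqP].
      have Hr : forall op, op \in Xa a -> run (Node x y ch) op = omap (cons a) (run t' op).
        by move=> op /Hxa [_ Ha] /=; rewrite Ha E.
      have Hrun' : forall op, op \in Xa a -> run t' op <> None.
        move=> op Hop; have := Hrun op (proj1 (Hxa op Hop)); rewrite Hr //.
        by case: (run t' op).
      have Hinj' : {in Xa a &, forall op1 op2, run t' op1 = run t' op2 -> op1 = op2}.
        move=> o1 o2 h1 h2 e; apply: Hinj; try by case: (Hxa _ h1); case: (Hxa _ h2).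
        by rewrite (Hr _ h1) (Hr _ h2) e.
      have := IH a t' E (Xa a) Hrun' Hinj'.
      have -> : (\sum_(op in Xa a) nqueries (Node x y ch) op =
                 \sum_(op in Xa a) nqueries t' op + #|Xa a|)%N.
        rewrite -sum1_card -big_split /=; apply: eq_bigr => op Hop.
        rewrite /nqueries (Hr _ Hop); have := Hrun' _ Hop.
        by case: (run t' op) => [p|] //= _; rewrite addn1.
      rewrite INR_addn Rmult_plus_distr_r; lra.
    + have -> : Xa a = set0.
        apply/setP => op; rewrite in_set0; apply/negP => Hop.
        move: (Hop); rewrite /Xa inE => /andP [HX /eqP Ha].
        by apply: (Hrun op HX); rewrite /= Ha E.
      rewrite cards0 big_set0 /= !Rmult_0_l; lra.
  have Hsum := @sumR_le S (fun _ => true) _ _ (fun a _ => Hper a).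
  rewrite big_split /= sumR_mulr sumR_mulr -!INR_sum -Hcard -Hpart in Hsum.
  have Hls := @log_sum S (fun a => #|Xa a|) HS.
  rewrite /= -Hcard in Hls.
  apply: Rle_trans Hsum. apply: Rle_trans (Rplus_le_compat_r _ _ _ Hls). lra.
Qed.
Lemma bij_exists (gT : finGroupType) (G : {group gT}) (S : finType) :
  #|S| = #|G| ->
  exists f0 : S -> gT, exists g0 : gT -> S,
    [/\ forall s, f0 s \in G, forall s, g0 (f0 s) = s & forall a, a \in G -> f0 (g0 a) = a].
Proof.
move=> h.
exists (fun s => @enum_val _ (mem G) (cast_ord h (enum_rank s))).
exists (fun a => @enum_val _ (mem S) (cast_ord (esym h) (enum_rank_in (group1 G) a))).
split.
- move=> s; exact: enum_valP.
- move=> s. by rewrite enum_valK_in cast_ordK enum_rankK.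
- move=> a Ha. by rewrite enum_valK cast_ordKV enum_rankK_in.
Qed.

Lemma count_X (gT : finGroupType) (G : {group gT}) (S : finType) (gens : seq gT) :
  #|S| = #|G| -> <<[set x in gens]>>%g = G ->
  (#|S|`! <= #|X_G S G| * expn #|S| (size gens))%N.
Proof.
move=> h hgen.
have [f0 [g0 [P1 P2 P3]]] := @bij_exists gT G S h.
have f0inj : injective f0 := can_inj P2.
set r := size gens.
pose op (s : {perm S}) : binop S := [ffun p => (s^-1)%g (g0 (f0 (s p.1) * f0 (s p.2))%g)].
pose Phi (s : {perm S}) := (op s, [tuple (s^-1)%g (g0 (nth 1%g gens i)) | i < r]).
have opX : forall s, op s \in X_G S G.
  move=> s; rewrite inE; apply/existsP; exists [ffun x => f0 (s x)].
  apply/and3P; split.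
  - apply/injectiveP => x y; rewrite !ffunE => /f0inj; exact: perm_inj.
  - rewrite eqEsubset; apply/andP; split.
      by apply/subsetP => a /imsetP [x _ ->]; rewrite ffunE.
    apply/subsetP => a Ha; apply/imsetP; exists ((s^-1)%g (g0 a)) => //.
    by rewrite ffunE permKV P3.
  - apply/forallP => x; apply/forallP => y; rewrite !ffunE /= permKV P3 //.
    by rewrite groupM.
have Phi_inj : injective Phi.
  move=> s t E0; have Eop := congr1 fst E0; have Etup := congr1 snd E0; rewrite /= in Eop Etup.
  pose k a := f0 (t ((s^-1)%g (g0 a))).
  have kG : forall a, k a \in G by move=> a; apply: P1.
  have kM : forall a b, a \in G -> b \in G -> k (a * b)%g = (k a * k b)%g.
    move=> a b Ha Hb.
    have := congr1 (fun o : binop S => o ((s^-1)%g (g0 a), (s^-1)%g (g0 b))) Eop.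
    rewrite /= !ffunE /= !permKV !P3 // => E.
    rewrite /k E permKV P3 //; by rewrite groupM.
  pose H := [set a in G | k a == a].
  have k1 : k 1%g = 1%g.
    have := kM 1%g 1%g (group1 G) (group1 G); rewrite mulg1.
    by move/(congr1 (fun z => (k 1%g)^-1 * z)%g); rewrite mulVg mulKg.
  have gH : group_set H.
    apply/group_setP; split; first by rewrite inE group1 k1 eqxx.
    move=> a b; rewrite !inE => /andP [Ha /eqP ka] /andP [Hb /eqP kb].
    by rewrite groupM // kM // ka kb eqxx.
  have sub : G \subset Group gH.
    rewrite -hgen gen_subG; apply/subsetP => g; rewrite inE => Hg.
    have gG : g \in G by rewrite -hgen; apply: mem_gen; rewrite inE.
    rewrite inE gG /=.
    have Hi : (index g gens < r)%N by rewrite index_mem.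
    have := congr1 (fun u : r.-tuple S => tnth u (Ordinal Hi)) Etup.
    rewrite /= !tnth_mktuple /= nth_index // => E.
    by rewrite /k E permKV P3.
  apply/permP => x.
  have Ha : f0 (s x) \in G := P1 _.
  have := subsetP sub _ Ha; rewrite inE => /andP [_ /eqP].
  by rewrite /k P2 permK => /f0inj.
have : (#|{perm S}| <= #|setX (X_G S G) [set: r.-tuple S]|)%N.
  rewrite -(card_imset _ Phi_inj); apply: subset_leq_card.
  apply/subsetP => p /imsetP [s _ ->]; rewrite inE /= opX inE //.
have -> : #|{perm S}| = #|S|`!.
  rewrite -cardsT -card_perm; apply: eq_card => s; rewrite !inE; apply/esym/subsetP => x _; by rewrite inE.
by rewrite cardsX cardsT card_tuple.
Qed.

Lemma fact_eq n : n`! = fact n.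
Proof. elim: n => [|n IH] //. by rewrite factS IH. Qed.

Lemma INR_expn m k : INR (expn m k) = (INR m ^ k)%R.
Proof. elim: k => [|k IH] //. by rewrite expnS -multE mult_INR IH. Qed.

Theorem mainTheorem4 (gT : finGroupType) (G : {group gT}) (n r : nat)
  (S : finType) (t : qtree S) :
  abelian G -> #|G| = n -> (2 <= n)%N ->
  (exists gens : seq gT, size gens = r /\ <<[set x in gens]>>%g = G) ->
  #|S| = n ->
  solves_product_recovering (X_G S G) t ->
  (expected_queries (X_G S G) t >=
     INR n - INR n / ln (INR n) + 1 / 2 - INR r)%R.
Proof.
move=> _ HG Hn2 [gens [Hr Hgen]] HS [Hrun Hinj _].
have Hcount := @count_X gT G S gens ltac:(by rewrite HS HG) Hgen.
rewrite Hr HS in Hcount.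
have Hkr := @kraft S t (X_G S G) ltac:(move=> op /Hrun [p ->] //) Hinj.
rewrite HS in Hkr.
set M := #|X_G S G| in Hcount Hkr *.
set T := (\sum_(op in X_G S G) nqueries t op)%N in Hkr *.
rewrite /expected_queries -/M -/T.
have Mpos : (0 < M)%N.
  rewrite lt0n; apply/negP => /eqP M0; move: Hcount; rewrite M0 mul0n leqn0.
  by rewrite (negbTE (lt0n_neq0 (fact_gt0 n))).
have Mr : (0 < INR M)%R by apply: lt_0_INR; apply/ltP.
have nr : (1 < INR n)%R by apply: (lt_INR 1); apply/ltP.
have L0 : (0 < ln (INR n))%R by rewrite -ln_1; apply: ln_increasing; lra.
have Hln : (ln (INR (fact n)) <= ln (INR M) + INR r * ln (INR n))%R.
  rewrite -fact_eq -ln_pow; last lra.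
  rewrite -ln_mult; [|lra|apply: pow_lt; lra].
  apply: ln_le; first by apply: lt_0_INR; apply/ltP; apply: fact_gt0.
  rewrite -INR_expn -mult_INR; apply: le_INR; apply/leP; exact: Hcount.
have Hst := stirling n ltac:(apply/leP; by apply: leq_trans Hn2).
set L := ln (INR n) in L0 Hkr Hln Hst *.
set lM := ln (INR M) in Hkr Hln.
have Q : (lM >= (INR n - INR n / L + 1 / 2 - INR r) * L)%R.
  have -> : ((INR n - INR n / L + 1 / 2 - INR r) * L = (INR n + /2) * L - INR n - INR r * L)%R by field; lra.
  lra.
apply: Rle_ge.
apply: (Rmult_le_reg_r (INR M)) => //.
rewrite Rdiv_def Rmult_assoc Rinv_l; last lra.
rewrite Rmult_1_r.
apply: (Rmult_le_reg_r L) => //.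
apply: Rle_trans Hkr.
have := Rmult_le_compat_l (INR M) _ _ (Rlt_le _ _ Mr) (Rge_le _ _ Q).
lra.
Qed.
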